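(* Let $A\in\mathbb{C}^{m\times n}$ and $b\in\mathbb{C}^m$ have computable entries. Then the pseudoinverse $A^\dagger$, the real number $\|A^\dagger\|_F$, the real number $\min_{x\in\mathbb{C}^n}\|Ax-b\|_2$, the vector $\hat x_{(A,b)}=A^\dagger b$, the real number $\|A^\dagger b\|_2$, and the real number $\|A\|_F\|A^\dagger\|_F$ all consist of computable entries (are computable).
   Context: $A^\dagger\in\mathbb{C}^{n\times m}$ is the Moore–Penrose pseudoinverse of $A$ (the unique matrix with $AA^\dagger A=A$, $A^\dagger AA^\dagger=A^\dagger$, $(AA^\dagger)^H=AA^\dagger$, $(A^\dagger A)^H=A^\dagger A$); $A^\dagger b$ is the minimal-Euclidean-norm minimizer of $\|Ax-b\|_2$. $\|\cdot\|_F$ is the Frobenius norm, $\|\cdot\|_2$ the Euclidean norm. A real number $x$ is computable if there are recursive functions $a,b,s:\mathbb{N}\to\mathbb{N}$ with $b(k)\ne0$ such that $r_k=(-1)^{s(k)}a(k)/b(k)$ satisfies $|r_k-x|\le 2^{-k}$ for all $k$; a complex number is computable if its real and imaginary parts are, and a vector/matrix is computable if all its entries are. *)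

(* Defs.v *)
From HB Require Import structures.
From mathcomp Require Import all_boot all_order all_algebra.
From mathcomp Require Import complex.
From mathcomp Require Import reals Rstruct.
From Stdlib Require Import Rdefinitions.
Set Implicit Arguments. Unset Strict Implicit. Unset Printing Implicit Defensive.
Import Order.TTheory GRing.Theory Num.Theory.
Inductive prcode : Type :=
  | PRzero
  | PRsucc
  | PRproj of nat
  | PRcomp of prcode & list prcode
  | PRrec of prcode & prcode
  | PRmu of prcode.

Inductive prcode_eval : prcode -> seq nat -> nat -> Prop :=
  | ev_zero xs : prcode_eval PRzero xs 0
  | ev_succ xs : prcode_eval PRsucc xs (nth 0 xs 0).+1
  | ev_proj i xs : prcode_eval (PRproj i) xs (nth 0 xs i)
  | ev_comp f gs xs ys y :
      prcode_evals gs xs ys -> prcode_eval f ys y -> prcode_eval (PRcomp f gs) xs y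
  | ev_rec0 f g xs y :
      prcode_eval f xs y -> prcode_eval (PRrec f g) (0 :: xs) y
  | ev_recS f g k xs r y :
      prcode_eval (PRrec f g) (k :: xs) r -> prcode_eval g (k :: r :: xs) y ->
      prcode_eval (PRrec f g) (k.+1 :: xs) y
  | ev_mu f xs y :
      prcode_eval f (y :: xs) 0 ->
      (forall z, (z < y)%N -> exists v, prcode_eval f (z :: xs) v.+1) ->
      prcode_eval (PRmu f) xs y
with prcode_evals : seq prcode -> seq nat -> seq nat -> Prop :=
  | evs_nil xs : prcode_evals [::] xs [::]
  | evs_cons g gs xs y ys :
      prcode_eval g xs y -> prcode_evals gs xs ys -> prcode_evals (g :: gs) xs (y :: ys).

Definition recursive_fun (f : nat -> nat) : Prop :=
  exists c : prcode, forall k : nat, prcode_eval c [:: k] (f k).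

Local Open Scope ring_scope.

Definition computable_real (x : R) : Prop :=
  exists a b s : nat -> nat,
    [/\ recursive_fun a, recursive_fun b, recursive_fun s &
      forall k : nat, (b k != 0)%N /\
        `| (-1) ^+ (s k) * (a k)%:R / (b k)%:R - x | <= 2%:R ^- k].

Notation C := (R[i]).

Definition computable_complex (z : C) : Prop :=
  computable_real (@complex.Re R z) /\ computable_real (@complex.Im R z).

Definition computable_mx (p q : nat) (M : 'M[C]_(p, q)) : Prop :=
  forall i j, computable_complex (M i j).

Definition ctrmx (p q : nat) (M : 'M[C]_(p, q)) : 'M[C]_(q, p) :=
  (map_mx (@conjc R) M)^T.

Definition sqmod (z : C) : R := (@complex.Re R z) ^+ 2 + (@complex.Im R z) ^+ 2.

Definition frob (p q : nat) (M : 'M[C]_(p, q)) : R :=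
  Num.sqrt (\sum_(i < p) \sum_(j < q) sqmod (M i j)).

Definition norm2 (p : nat) (v : 'cV[C]_p) : R :=
  Num.sqrt (\sum_(i < p) sqmod (v i 0)).

Definition is_pinv (p q : nat) (A : 'M[C]_(p, q)) (X : 'M[C]_(q, p)) : Prop :=
  [/\ A *m X *m A = A, X *m A *m X = X,
      ctrmx (A *m X) = A *m X & ctrmx (X *m A) = X *m A].

Definition is_lsq_min (p q : nat) (A : 'M[C]_(p, q)) (b : 'cV[C]_p) (r : R) : Prop :=
  (exists x : 'cV[C]_q, norm2 (A *m x - b) = r) /\
  (forall x : 'cV[C]_q, r <= norm2 (A *m x - b)).

(* Main.v *)
Require Import Defs.
From HB Require Import structures.
From mathcomp Require Import all_boot all_order all_algebra.
From mathcomp Require Import complex.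
From mathcomp Require Import reals Rstruct.
From Stdlib Require Import Rdefinitions ClassicalEpsilon.
From mathcomp Require Import zify ring lra.
Set Implicit Arguments. Unset Strict Implicit. Unset Printing Implicit Defensive.
Import Order.TTheory GRing.Theory Num.Theory.

Definition rf (F : seq nat -> nat) := exists c, forall xs, prcode_eval c xs (F xs).
Definition rf1 (f : nat -> nat) := rf (fun xs => f (nth 0 xs 0)).
Definition rf2 (f : nat -> nat -> nat) := rf (fun xs => f (nth 0 xs 0) (nth 0 xs 1)).
Definition rf3 (f : nat -> nat -> nat -> nat) :=
  rf (fun xs => f (nth 0 xs 0) (nth 0 xs 1) (nth 0 xs 2)).

Lemma rf_ext F G : rf F -> (forall xs, F xs = G xs) -> rf G.
Proof. by case=> c hc e; exists c => xs; rewrite -e. Qed.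

Lemma rf_zero : rf (fun _ => 0).
Proof. by exists PRzero => xs; constructor. Qed.

Lemma rf_succ : rf (fun xs => (nth 0 xs 0).+1).
Proof. by exists PRsucc => xs; constructor. Qed.

Lemma rf_proj i : rf (fun xs => nth 0 xs i).
Proof. by exists (PRproj i) => xs; constructor. Qed.

Lemma rf_comp1 F g : rf F -> rf g -> rf (fun xs => F [:: g xs]).
Proof.
case=> c hc [d hd]; exists (PRcomp c [:: d]) => xs.
by apply: ev_comp (hc _); constructor; [apply: hd | constructor].
Qed.

Lemma rf_comp2 F g h : rf F -> rf g -> rf h -> rf (fun xs => F [:: g xs; h xs]).
Proof.
case=> c hc [d hd] [d' hd']; exists (PRcomp c [:: d; d']) => xs.
by apply: ev_comp (hc _); constructor; [apply: hd | constructor; [apply: hd'|constructor]].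
Qed.

Lemma rf_comp3 F g h l : rf F -> rf g -> rf h -> rf l ->
  rf (fun xs => F [:: g xs; h xs; l xs]).
Proof.
case=> c hc [d hd] [d' hd'] [d'' hd'']; exists (PRcomp c [:: d; d'; d'']) => xs.
apply: ev_comp (hc _); constructor; first exact: hd.
constructor; first exact: hd'.
by constructor; [apply: hd''|constructor].
Qed.

Lemma rf1_comp f G : rf1 f -> rf G -> rf (fun xs => f (G xs)).
Proof. move=> hf hG; exact: (rf_comp1 hf hG). Qed.

Lemma rf2_comp f G H : rf2 f -> rf G -> rf H -> rf (fun xs => f (G xs) (H xs)).
Proof. move=> hf hG hH; exact: (rf_comp2 hf hG hH). Qed.

Lemma rf3_comp f G H L : rf3 f -> rf G -> rf H -> rf L -> rf (fun xs => f (G xs) (H xs) (L xs)).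
Proof. move=> hf hG hH hL; exact: (rf_comp3 hf hG hH hL). Qed.

Lemma rf_const c : rf (fun _ => c).
Proof.
elim: c => [|c IH]; first exact: rf_zero.
exact: (rf1_comp rf_succ IH).
Qed.

Fixpoint prec (f : nat -> nat) (g : nat -> nat -> nat -> nat) (k y : nat) : nat :=
  if k is k'.+1 then g k' (prec f g k' y) y else f y.

Lemma rf_prec f g : rf1 f -> rf3 g -> rf2 (prec f g).
Proof.
case=> c hc [d hd]; exists (PRcomp (PRrec c d) [:: PRproj 0; PRproj 1]) => xs.
apply: ev_comp.
  constructor; first constructor.
  constructor; first constructor.
  constructor.
set y := nth 0 xs 1; elim: (nth 0 xs 0) => [|k IH] /=.
  by constructor; apply: hc.
by apply: ev_recS IH _; apply: hd.
Qed.

Lemma rf1_id : rf1 id.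
Proof. exact: rf_proj. Qed.

Lemma rf2_add : rf2 addn.
Proof.
apply: (@rf_ext (fun xs => prec id (fun _ r _ => r.+1) (nth 0 xs 0) (nth 0 xs 1))).
  apply: rf_prec; first exact: rf1_id.
  exact: (rf1_comp rf_succ (rf_proj 1)).
move=> xs /=; elim: (nth 0 xs 0) => //= k ->; by [].
Qed.

Lemma rf2_mul : rf2 muln.
Proof.
apply: (@rf_ext (fun xs => prec (fun _ => 0) (fun _ r y => r + y) (nth 0 xs 0) (nth 0 xs 1))).
  apply: rf_prec; first exact: rf_zero.
  exact: (rf2_comp rf2_add (rf_proj 1) (rf_proj 2)).
move=> xs /=; elim: (nth 0 xs 0) => //= k ->; rewrite mulSn addnC //.
Qed.

Lemma rf1_pred : rf1 predn.
Proof.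
apply: (rf_ext (@rf_prec (fun _ => 0) (fun k _ _ => k) rf_zero (rf_proj 0))).
by move=> xs; case: (nth 0 xs 0).
Qed.

Lemma rf2_subr : rf2 (fun y x => x - y).
Proof.
apply: (@rf_ext (fun xs => prec id (fun _ r _ => r.-1) (nth 0 xs 0) (nth 0 xs 1))).
  apply: rf_prec; first exact: rf1_id.
  exact: (rf1_comp rf1_pred (rf_proj 1)).
move=> xs /=; elim: (nth 0 xs 0) => //= [|k ->]; first by rewrite subn0.
by rewrite subnS.
Qed.

Lemma rf2_sub : rf2 subn.
Proof. exact: (rf2_comp rf2_subr (rf_proj 1) (rf_proj 0)). Qed.

Definition ifnz (c x y : nat) := if c is 0 then y else x.

Lemma rf3_ifnz : rf3 ifnz.
Proof.
pose c := rf_proj 0; pose x := rf_proj 1; pose y := rf_proj 2.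
have h1c : rf (fun xs => 1 - nth 0 xs 0) := rf2_comp rf2_sub (rf_const 1) c.
have h2 : rf (fun xs => 1 - (1 - nth 0 xs 0)) := rf2_comp rf2_sub (rf_const 1) h1c.
apply: (rf_ext (rf2_comp rf2_add (rf2_comp rf2_mul h2 x) (rf2_comp rf2_mul h1c y))).
by move=> xs; rewrite /ifnz; case: (nth 0 xs 0) => [|k] /=; rewrite ?mul0n ?mul1n ?addn0 ?subn0.
Qed.

Lemma rf2_ltb : rf2 (fun a b => nat_of_bool (a < b)).
Proof.
apply: (rf_ext (rf2_comp rf2_sub (rf_const 1) (rf2_comp rf2_sub (rf1_comp rf_succ (rf_proj 0)) (rf_proj 1)))).
move=> xs /=; case: ltnP => h; lia.
Qed.

Lemma rf1_odd : rf1 (fun n => nat_of_bool (odd n)).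
Proof.
have h := rf_prec (f := fun _ => 0) (g := fun _ r _ => 1 - r) rf_zero (rf2_comp rf2_sub (rf_const 1) (rf_proj 1)).
apply: (rf_ext (rf2_comp h (rf_proj 0) (rf_const 0))) => xs /=.
elim: (nth 0 xs 0) => //= k ->; by case: (odd k).
Qed.

Lemma rf1_pow2 : rf1 (fun k => expn 2 k).
Proof.
have h := rf_prec (f := fun _ => 1) (g := fun _ r _ => r + r) (rf_const 1) (rf2_comp rf2_add (rf_proj 1) (rf_proj 1)).
apply: (rf_ext (rf2_comp h (rf_proj 0) (rf_const 0))) => xs /=.
elim: (nth 0 xs 0) => //= k ->; by rewrite expnS mul2n addnn.
Qed.

Definition isqrt_step (k r : nat) := ifnz (nat_of_bool (k.+1 < r.+1 * r.+1)) r r.+1.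
Definition isqrt (n : nat) := prec (fun _ => 0) (fun k r _ => isqrt_step k r) n 0.

Lemma rf1_isqrt : rf1 isqrt.
Proof.
have hs : rf3 (fun k r _ => isqrt_step k r).
  apply: (rf3_comp rf3_ifnz _ (rf_proj 1) (rf1_comp rf_succ (rf_proj 1))).
  apply: (rf2_comp rf2_ltb (rf1_comp rf_succ (rf_proj 0))).
  exact: (rf2_comp rf2_mul (rf1_comp rf_succ (rf_proj 1)) (rf1_comp rf_succ (rf_proj 1))).
have h := rf_prec (f := fun _ => 0) rf_zero hs.
exact: (rf_ext (rf2_comp h (rf_proj 0) (rf_const 0))).
Qed.

Lemma isqrtP n : isqrt n * isqrt n <= n < (isqrt n).+1 * (isqrt n).+1.
Proof.
elim: n => [|k IH] //=.
rewrite /isqrt /= -/(isqrt k) /isqrt_step.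
move: IH; set r := isqrt k => /andP[h1 h2].
case: ltnP => h /=.
  by rewrite (leq_trans h1) //=.
apply/andP; split => //; nia.
Qed.

Definition RK (f : nat -> nat) := rf1 f.

Lemma RK_rec f : recursive_fun f <-> RK f.
Proof.
split.
  case=> c hc; exists (PRcomp c [:: PRproj 0]) => xs.
  by apply: ev_comp (hc _); constructor; constructor.
by case=> c hc; exists c => k; exact: (hc [:: k]).
Qed.

Lemma RK_op1 g f : rf1 g -> RK f -> RK (fun k => g (f k)).
Proof. move=> hg hf; exact: (rf1_comp hg hf). Qed.

Lemma RK_op2 op f g : rf2 op -> RK f -> RK g -> RK (fun k => op (f k) (g k)).
Proof. move=> ho hf hg; exact: (rf2_comp ho hf hg). Qed.

Lemma RK_op3 op f g h : rf3 op -> RK f -> RK g -> RK h -> RK (fun k => op (f k) (g k) (h k)).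
Proof. move=> ho hf hg hh; exact: (rf3_comp ho hf hg hh). Qed.

Lemma RK_const c : RK (fun _ => c).
Proof. exact: rf_const. Qed.

Lemma RK_id : RK id.
Proof. exact: rf_proj. Qed.

Lemma RK_comp f g : RK f -> RK g -> RK (fun k => f (g k)).
Proof. exact: RK_op1. Qed.

Lemma RK_shift f c : RK f -> RK (fun k => f (k + c)).
Proof. move=> hf; apply: RK_comp hf (RK_op2 rf2_add RK_id (RK_const c)). Qed.

Delimit Scope ring_scope with ring.

Local Open Scope ring_scope.
Notation CR := computable_real.
Definition e (k : nat) := (2%:R : R) ^- k.
Definition qv (a b s : nat) := (-1) ^+ s * a%:R / (b%:R : R).
Definition approx (a b s : nat -> nat) (x : R) :=
  forall k, (b k != 0)%N /\ `|qv (a k) (b k) (s k) - x| <= e k.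

Lemma CRP x : CR x <-> exists a b s, [/\ RK a, RK b, RK s & approx a b s x].
Proof.
split.
  case=> a [b [s [ha hb hs h]]]; exists a, b, s; split; try exact/RK_rec.
  exact: h.
case=> a [b [s [ha hb hs h]]]; exists a, b, s; split; try exact/RK_rec.
exact: h.
Qed.

Lemma two_gt0 : 0 < (2%:R : R). Proof. by rewrite ltr0n. Qed.

Lemma e_gt0 k : 0 < e k.
Proof. by rewrite /e invr_gt0 exprn_gt0 // two_gt0. Qed.

Lemma e_ge0 k : 0 <= e k.
Proof. exact: ltW (e_gt0 k). Qed.

Lemma eD k j : e (k + j) = e k * e j.
Proof. by rewrite /e exprD invfM. Qed.

Lemma e1 : e 1 = 2%:R^-1.
Proof. by rewrite /e expr1. Qed.

Lemma e_half k : e k.+1 + e k.+1 = e k.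
Proof.
rewrite -addn1 eD e1.
lra.
Qed.

Lemma e_le1 k : e k <= 1.
Proof. by rewrite /e invr_le1 ?exprn_ege1 ?ler1n ?exprn_gt0 ?two_gt0 // unitfE expf_neq0 // pnatr_eq0. Qed.

Lemma e_mono (k j : nat) : leq k j -> e j <= e k.
Proof.
move=> h; rewrite -(subnKC h) eD.
by rewrite ger_pMr ?e_gt0 ?e_le1.
Qed.

Lemma pow2e c k : 2%:R ^+ c * e (k + c) = e k.
Proof.
rewrite eD mulrCA /e mulfV ?mulr1 // expf_neq0 // pnatr_eq0 //.
Qed.

Lemma pow2_ge1 c : 1 <= (2%:R : R) ^+ c.
Proof. by rewrite exprn_ege1 // ler1n. Qed.

Lemma qv_norm a b s : `|qv a b s| = a%:R / b%:R.
Proof.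
rewrite /qv normrM normrM normrX normrN1 expr1n mul1r normfV !normr_nat //.
Qed.

Lemma qvN a b s : qv a b s.+1 = - qv a b s.
Proof. by rewrite /qv exprS mulN1r !mulNr. Qed.

Lemma qv0 b s : qv 0 b s = 0.
Proof. by rewrite /qv mulr0 mul0r. Qed.

Lemma qv_inv a b s : qv b a s = (qv a b s)^-1.
Proof.
rewrite /qv !invfM invrK -signr_odd; case: (odd s); rewrite /= ?expr1 ?expr0 ?invrN1 ?invr1 mulrAC //.
Qed.

Definition toP (s a : nat) := ifnz (odd s) 0%nat a.
Definition toN (s a : nat) := ifnz (odd s) a 0%nat.

Lemma rf2_toP : rf2 toP.
Proof. exact: (rf3_comp rf3_ifnz (rf1_comp rf1_odd (rf_proj 0)) (rf_const 0) (rf_proj 1)). Qed.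
Lemma rf2_toN : rf2 toN.
Proof. exact: (rf3_comp rf3_ifnz (rf1_comp rf1_odd (rf_proj 0)) (rf_proj 1) (rf_const 0)). Qed.

Lemma qv_PN a b s : qv a b s = ((toP s a)%:R - (toN s a)%:R) / b%:R.
Proof.
rewrite /qv /toP /toN -signr_odd; case: (odd s) => /=.
  by rewrite expr1 mulN1r sub0r mulNr.
by rewrite expr0 mul1r subr0.
Qed.

Definition cnum (P N : nat) := ((P - N) + (N - P))%nat.
Definition csgn (P N : nat) := nat_of_bool (P < N)%nat.

Lemma rf2_cnum : rf2 cnum.
Proof. exact: (rf2_comp rf2_add (rf2_comp rf2_sub (rf_proj 0) (rf_proj 1)) (rf2_comp rf2_sub (rf_proj 1) (rf_proj 0))). Qed.

Lemma PN_qv P N D : (P%:R - N%:R) / (D%:R : R) = qv (cnum P N) D (csgn P N).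
Proof.
rewrite /qv /cnum /csgn; case: ltnP => h /=.
  have -> : (P - N = 0)%nat by apply/eqP; rewrite subn_eq0 ltnW.
  by rewrite add0n natrB ?(ltnW h) // expr1 mulN1r opprB.
have -> : (N - P = 0)%nat by apply/eqP; rewrite subn_eq0.
by rewrite addn0 natrB // expr0 mul1r.
Qed.

Lemma CR0 : CR 0.
Proof.
apply/CRP; exists (fun _ => 0%nat), (fun _ => 1%nat), (fun _ => 0%nat); split; try exact: RK_const.
by move=> k; split => //; rewrite qv0 subr0 normr0 e_ge0.
Qed.

Lemma CR1 : CR 1.
Proof.
apply/CRP; exists (fun _ => 1%nat), (fun _ => 1%nat), (fun _ => 0%nat); split; try exact: RK_const.
by move=> k; split => //; rewrite /qv expr0 mul1r divr1 subrr normr0 e_ge0.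
Qed.

Lemma CRN x : CR x -> CR (- x).
Proof.
case/CRP=> a [b [s [ha hb hs h]]].
apply/CRP; exists a, b, (fun k => (s k).+1); split => //.
  exact: (RK_op1 rf_succ hs).
move=> k; have [h1 h2] := h k; split => //.
by rewrite qvN -opprD normrN.
Qed.

Definition addP a1 b1 s1 a2 b2 s2 := (toP s1 a1 * b2 + toP s2 a2 * b1)%nat.
Definition addN a1 b1 s1 a2 b2 s2 := (toN s1 a1 * b2 + toN s2 a2 * b1)%nat.

Lemma ratD (F : fieldType) (p1 n1 b1 p2 n2 b2 : F) : b1 != 0 -> b2 != 0 ->
  (p1 - n1) / b1 + (p2 - n2) / b2 = ((p1 * b2 + p2 * b1) - (n1 * b2 + n2 * b1)) / (b1 * b2).
Proof. by move=> h1 h2; field; rewrite h1 h2. Qed.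

Lemma qv_add a1 b1 s1 a2 b2 s2 : (b1 != 0)%nat -> (b2 != 0)%nat ->
  qv a1 b1 s1 + qv a2 b2 s2 =
  qv (cnum (addP a1 b1 s1 a2 b2 s2) (addN a1 b1 s1 a2 b2 s2)) (b1 * b2)
     (csgn (addP a1 b1 s1 a2 b2 s2) (addN a1 b1 s1 a2 b2 s2)).
Proof.
move=> h1 h2; rewrite -PN_qv !qv_PN ratD ?pnatr_eq0 //.
by rewrite /addP /addN !natrD !natrM.
Qed.

Lemma CRD x y : CR x -> CR y -> CR (x + y).
Proof.
case/CRP=> a1 [b1 [s1 [ha1 hb1 hs1 h1]]].
case/CRP=> a2 [b2 [s2 [ha2 hb2 hs2 h2]]].
pose j k := (k + 1)%nat.
pose P k := addP (a1 (j k)) (b1 (j k)) (s1 (j k)) (a2 (j k)) (b2 (j k)) (s2 (j k)).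
pose N k := addN (a1 (j k)) (b1 (j k)) (s1 (j k)) (a2 (j k)) (b2 (j k)) (s2 (j k)).
have hP : RK P.
  apply: (RK_op2 rf2_add); apply: (RK_op2 rf2_mul); try apply: (RK_op2 rf2_toP);
  by apply: RK_shift.
have hN : RK N.
  apply: (RK_op2 rf2_add); apply: (RK_op2 rf2_mul); try apply: (RK_op2 rf2_toN);
  by apply: RK_shift.
apply/CRP; exists (fun k => cnum (P k) (N k)), (fun k => b1 (j k) * b2 (j k))%nat,
  (fun k => csgn (P k) (N k)); split.
- exact: RK_op2 rf2_cnum hP hN.
- by apply: (RK_op2 rf2_mul); apply: RK_shift.
- exact: RK_op2 rf2_ltb hP hN.
move=> k; have [h1a h1b] := h1 (j k); have [h2a h2b] := h2 (j k).
split; first by rewrite muln_eq0 negb_or h1a h2a.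
have -> : qv (cnum (P k) (N k)) (b1 (j k) * b2 (j k)) (csgn (P k) (N k)) =
  qv (a1 (j k)) (b1 (j k)) (s1 (j k)) + qv (a2 (j k)) (b2 (j k)) (s2 (j k)).
  by rewrite qv_add.
rewrite -(e_half k).
rewrite opprD addrACA.
apply: le_trans (ler_normD _ _) _; apply: lerD; [move: h1b | move: h2b]; by rewrite /j addn1.
Qed.

Lemma bound_pow (z : R) : exists c, `|z| <= 2%:R ^+ c.
Proof.
exists (Num.Def.archi_bound `|z|).
apply: le_trans (ltW (archi_boundP (normr_ge0 z))) _.
rewrite -natrX ler_nat; apply: ltnW; exact: ltn_expl.
Qed.

Lemma bound_inv (x : R) : x != 0 -> exists c, e c <= `|x|.
Proof.
move=> hx; have [c hc] := bound_pow x^-1; exists c.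
have hpx : 0 < `|x| by rewrite normr_gt0.
rewrite /e -[leRHS]invrK lef_pV2 ?posrE ?invr_gt0 ?exprn_gt0 ?two_gt0 //.
by rewrite -normrV.
Qed.

Definition mulP (a1 s1 a2 s2 : nat) := (toP s1 a1 * toP s2 a2 + toN s1 a1 * toN s2 a2)%nat.
Definition mulN (a1 s1 a2 s2 : nat) := (toP s1 a1 * toN s2 a2 + toN s1 a1 * toP s2 a2)%nat.

Lemma ratM (F : fieldType) (p1 n1 b1 p2 n2 b2 : F) : b1 != 0 -> b2 != 0 ->
  (p1 - n1) / b1 * ((p2 - n2) / b2) = ((p1 * p2 + n1 * n2) - (p1 * n2 + n1 * p2)) / (b1 * b2).
Proof. by move=> h1 h2; field; rewrite h1 h2. Qed.

Lemma qv_mul a1 b1 s1 a2 b2 s2 : (b1 != 0)%N -> (b2 != 0)%N ->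
  qv a1 b1 s1 * qv a2 b2 s2 =
  qv (cnum (mulP a1 s1 a2 s2) (mulN a1 s1 a2 s2)) (b1 * b2)
     (csgn (mulP a1 s1 a2 s2) (mulN a1 s1 a2 s2)).
Proof.
move=> h1 h2; rewrite -PN_qv !qv_PN ratM ?pnatr_eq0 //.
by rewrite /mulP /mulN !natrD !natrM.
Qed.

Lemma mul_err (r1 r2 x y B E : R) : 0 <= E -> E <= 1 -> 1 <= B -> `|x| <= B -> `|y| <= B ->
  `|r1 - x| <= E -> `|r2 - y| <= E -> `|r1 * r2 - x * y| <= B * 4%:R * E.
Proof.
move=> E0 E1 B1 hx hy h1 h2.
have hr1 : `|r1| <= B + E.
  have := ler_normD (r1 - x)%ring x; rewrite subrK => h; lra.
have t1 : `|r1| * `|r2 - y| <= (B + E) * E by apply: ler_pM.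
have t2 : `|r1 - x| * `|y| <= E * B by apply: ler_pM.
have t3 : E * E <= B * E by apply: ler_wpM2r => //; lra.
have -> : r1 * r2 - x * y = r1 * (r2 - y) + (r1 - x) * y.
  by rewrite mulrBr mulrBl addrA subrK.
apply: le_trans (ler_normD _ _) _; rewrite !normrM.
have t4 : 0 <= B * E by apply: mulr_ge0; lra.
nra.
Qed.

Lemma CRM x y : CR x -> CR y -> CR (x * y).
Proof.
case/CRP=> a1 [b1 [s1 [ha1 hb1 hs1 h1]]].
case/CRP=> a2 [b2 [s2 [ha2 hb2 hs2 h2]]].
have [c hc] := bound_pow (`|x| + `|y|)%ring.
rewrite ger0_norm ?addr_ge0 // in hc.
pose j k := (k + (c + 2))%nat.
pose P k := mulP (a1 (j k)) (s1 (j k)) (a2 (j k)) (s2 (j k)).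
pose N k := mulN (a1 (j k)) (s1 (j k)) (a2 (j k)) (s2 (j k)).
have hP : RK P.
  apply: (RK_op2 rf2_add); apply: (RK_op2 rf2_mul); (apply: (RK_op2 rf2_toP) || apply: (RK_op2 rf2_toN));
  by apply: RK_shift.
have hN : RK N.
  apply: (RK_op2 rf2_add); apply: (RK_op2 rf2_mul); (apply: (RK_op2 rf2_toP) || apply: (RK_op2 rf2_toN));
  by apply: RK_shift.
apply/CRP; exists (fun k => cnum (P k) (N k)), (fun k => b1 (j k) * b2 (j k))%nat,
  (fun k => csgn (P k) (N k)); split.
- exact: RK_op2 rf2_cnum hP hN.
- by apply: (RK_op2 rf2_mul); apply: RK_shift.
- exact: RK_op2 rf2_ltb hP hN.
move=> k; have [h1a h1b] := h1 (j k); have [h2a h2b] := h2 (j k).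
split; first by rewrite muln_eq0 negb_or h1a h2a.
have -> : qv (cnum (P k) (N k)) (b1 (j k) * b2 (j k)) (csgn (P k) (N k)) =
  qv (a1 (j k)) (b1 (j k)) (s1 (j k)) * qv (a2 (j k)) (b2 (j k)) (s2 (j k)).
  by rewrite qv_mul.
have h4 : (2%:R : R) ^+ 2 = 4%:R by rewrite -natrX.
rewrite -(pow2e (c + 2) k) exprD h4.
apply: mul_err => //.
- exact: e_ge0.
- exact: e_le1.
- exact: pow2_ge1.
- have := normr_ge0 y; lra.
- have := normr_ge0 x; lra.
Qed.

Lemma invdiff (F : fieldType) (r x : F) : r != 0 -> x != 0 ->
  r^-1 - x^-1 = (x - r) * (r^-1 * x^-1).
Proof. by move=> h1 h2; field; rewrite h1 h2. Qed.

Lemma inv_err (r x E F : R) : 0 < F -> F <= `|r| -> F <= `|x| -> `|r - x| <= E ->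
  `|r^-1 - x^-1| <= E / (F * F).
Proof.
move=> F0 hr hx h.
have r0 : r != 0 by rewrite -normr_gt0; apply: lt_le_trans hr.
have x0 : x != 0 by rewrite -normr_gt0; apply: lt_le_trans hx.
rewrite invdiff //.
rewrite normrM normrM !normrV ?unitfE // distrC invfM.
apply: ler_pM => //.
  by rewrite mulr_ge0 // invr_ge0 normr_ge0.
apply: ler_pM; rewrite ?invr_ge0 ?normr_ge0 //.
  by rewrite lef_pV2 ?posrE // normr_gt0.
by rewrite lef_pV2 ?posrE // normr_gt0.
Qed.

Lemma CRV x : CR x -> CR x^-1.
Proof.
have [->|x0] := eqVneq x 0; first by rewrite invr0.
case/CRP=> a [b [s [ha hb hs h]]].
have [c hc] := bound_inv x0.
pose j k := (k + ((c + 1) + (c + 1)))%nat.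
apply/CRP; exists (fun k => b (j k)), (fun k => a (j k)), (fun k => s (j k)); split;
  try by apply: RK_shift.
move=> k; have [hb0 hk] := h (j k).
have hej : e (j k) <= e (c + 1) by apply: e_mono; rewrite /j; lia.
have hec : e (c + 1) + e (c + 1) = e c by rewrite addn1 e_half.
have hr : e (c + 1) <= `|qv (a (j k)) (b (j k)) (s (j k))|.
  have := ler_normD (x - qv (a (j k)) (b (j k)) (s (j k)))%ring (qv (a (j k)) (b (j k)) (s (j k))).
  rewrite subrK distrC => ht; lra.
have hF := e_gt0 (c + 1).
split.
  apply/negP => /eqP ha0; move: hr; rewrite ha0 qv0 normr0 => hr'; lra.
rewrite qv_inv.
apply: le_trans (inv_err hF hr _ hk) _; first lra.
rewrite /j !eD mulfK ?lexx // gt_eqF // !mulr_gt0 // ?e_gt0 //.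
Qed.

Lemma normB_le (F : realDomainType) (u v : F) : 0 <= u -> 0 <= v -> `|u - v| <= u + v.
Proof. by move=> hu hv; rewrite ler_norml; apply/andP; split; lra. Qed.

Lemma sqrt_lip (a b : R) : 0 <= a -> 0 <= b ->
  `|Num.sqrt a - Num.sqrt b| <= Num.sqrt `|a - b|.
Proof.
move=> ha hb.
have hu := sqrtr_ge0 a; have hv := sqrtr_ge0 b.
set u := Num.sqrt a; set v := Num.sqrt b.
have ea : a = u ^+ 2 by rewrite sqr_sqrtr.
have eb : b = v ^+ 2 by rewrite sqr_sqrtr.
have h1 : `|u - v| <= u + v by apply: normB_le.
have h2 : `|u - v| ^+ 2 <= `|a - b|.
  rewrite ea eb subr_sqr normrM expr2 ler_wpM2l // (ger0_norm (addr_ge0 hu hv)) //.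
rewrite -[`|u - v|]normr_id -sqrtr_sqr.
exact: ler_wsqrtr.
Qed.

Lemma toP_err a b s (x : R) : 0 <= x ->
  `|(toP s a)%:R / (b%:R : R) - x| <= `|qv a b s - x|.
Proof.
move=> hx; rewrite qv_PN /toP /toN; case: (odd s) => /=; last by rewrite subr0.
rewrite mul0r sub0r sub0r mulNr -opprD !normrN.
have ht : 0 <= a%:R / (b%:R : R) by rewrite divr_ge0.
by rewrite !ger0_norm ?addr_ge0 // ?oppr_ge0 //; lra.
Qed.

Lemma fld_sq (F : fieldType) (P B W : F) : B != 0 -> P * B * (W * W) = P / B * ((B * W) ^+ 2).
Proof. by move=> h; field; rewrite h. Qed.

Lemma CRsqrt x : CR x -> CR (Num.sqrt x).
Proof.
move=> hxc.
have [hx|hx] := ltrP x 0; first by rewrite ler0_sqrtr ?ltW //; apply: CR0.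
case/CRP: hxc => a [b [s [ha hb hs h]]].
pose j k := ((k + 1) + (k + 1))%nat.
pose Pp k := toP (s (j k)) (a (j k)).
pose B k := b (j k).
pose W k := expn 2 (k + 1).
pose N k := (Pp k * B k * (W k * W k))%nat.
have hj1 : RK (fun k => k + 1)%nat := RK_op2 rf2_add RK_id (RK_const 1).
have hj : RK j := RK_op2 rf2_add hj1 hj1.
have hPp : RK Pp by apply: (RK_op2 rf2_toP); apply: RK_comp hj.
have hB : RK B by apply: RK_comp hj.
have hW : RK W by exact: (RK_comp rf1_pow2 hj1).
apply/CRP; exists (fun k => isqrt (N k)), (fun k => B k * W k)%nat, (fun _ => 0%nat); split.
- apply: (RK_op1 rf1_isqrt); apply: (RK_op2 rf2_mul); first exact: (RK_op2 rf2_mul).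
  exact: (RK_op2 rf2_mul).
- exact: (RK_op2 rf2_mul).
- exact: RK_const.
move=> k; have [hb0 hk] := h (j k).
have hW0 : (W k != 0)%nat by rewrite /W expn_eq0.
split; first by rewrite muln_eq0 negb_or hb0.
set q := (Pp k)%:R / ((B k)%:R : R).
have hq0 : 0 <= q by rewrite divr_ge0.
have hqx : `|q - x| <= e (j k) := le_trans (toP_err _ _ _ hx) hk.
have hej : e (j k) = e (k + 1) ^+ 2 by rewrite /j eD expr2.
have step1 : `|Num.sqrt q - Num.sqrt x| <= e (k + 1).
  apply: le_trans (sqrt_lip hq0 hx) _.
  have -> : e (k + 1) = Num.sqrt (e (j k)) by rewrite hej sqrtr_sqr ger0_norm // e_ge0.
  exact: ler_wsqrtr.
set y := isqrt (N k).
set D := ((B k * W k)%nat%:R : R).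
have hD : 0 < D by rewrite ltr0n muln_gt0 !lt0n hb0.
set t := Num.sqrt ((N k)%:R : R).
have ht : Num.sqrt q * D = t.
  rewrite /t /N !natrM fld_sq ?pnatr_eq0 // -/q.
  by rewrite -natrM [Num.sqrt (q * _)]sqrtrM // sqrtr_sqr ger0_norm // ltW.
have [hy1 hy2] := andP (isqrtP (N k)); rewrite -/y in hy1 hy2.
have hyt1 : (y%:R : R) <= t.
  rewrite -(ger0_norm (ler0n _ y)) -sqrtr_sqr; apply: ler_wsqrtr.
  by rewrite expr2 -natrM ler_nat.
have hyt2 : t < y%:R + 1.
  rewrite -(ger0_norm (addr_ge0 (ler0n _ y) ler01)) -sqrtr_sqr ltr_sqrt ?exprn_gt0 ?ltr_wpDl //.
  by rewrite natr1 expr2 -natrM ltr_nat.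
have step2 : `|y%:R / D - Num.sqrt q| <= e (k + 1).
  have -> : Num.sqrt q = t / D by rewrite -ht mulfK // gt_eqF.
  rewrite -mulrBl normrM normfV (ger0_norm (ltW hD)).
  have hyt : `|y%:R - t| <= 1 by rewrite ler_norml; apply/andP; split; lra.
  have hDW : e (k + 1) = ((W k)%:R : R)^-1 by rewrite /e /W natrX.
  rewrite hDW; apply: le_trans (ler_wpM2r _ hyt) _; first by rewrite invr_ge0 ltW.
  rewrite mul1r lef_pV2 ?posrE ?ltr0n ?lt0n ?muln_eq0 ?negb_or ?hb0 ?hW0 //.
  by rewrite /D natrM ler_peMl // ?ler0n // ler1n lt0n.
rewrite /qv expr0 mul1r -(e_half k) -addn1.
have := ler_normD (y%:R / D - Num.sqrt q)%ring (Num.sqrt q - Num.sqrt x)%ring.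
rewrite addrA subrK => h3; lra.
Qed.



Lemma CRB x y : CR x -> CR y -> CR (x - y).
Proof. by move=> hx hy; apply: CRD => //; apply: CRN. Qed.

Lemma CR_sum (I : finType) (F : I -> R) : (forall i, CR (F i)) -> CR (\sum_i F i).
Proof. move=> h; apply: big_ind => //; [exact: CR0| exact: CRD]. Qed.

Lemma CC_1 : computable_complex 1.
Proof. split; [exact: CR1 | exact: CR0]. Qed.

Lemma CC_sub x y : computable_complex x -> computable_complex y -> computable_complex (x - y).
Proof. case: x => a b; case: y => c d [ha hb] [hc hd]; split => /=; exact: CRB. Qed.

Lemma CC_mul x y : computable_complex x -> computable_complex y -> computable_complex (x * y).
Proof. case: x => a b; case: y => c d [ha hb] [hc hd]; split => /=.
  by apply: CRB; apply: CRM.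
  by apply: CRD; apply: CRM.
Qed.

Lemma CC_inv x : computable_complex x -> computable_complex x^-1.
Proof. case: x => a b [ha hb].
have hn : CR ((a ^+ 2 + b ^+ 2)^-1) by apply/CRV/CRD; rewrite expr2; apply: CRM.
split => /=; last apply: CRN; exact: CRM.
Qed.

Lemma CC_div x y : computable_complex x -> computable_complex y -> computable_complex (x / y).
Proof. by move=> hx hy; apply: CC_mul => //; apply: CC_inv. Qed.

Lemma CC_conj x : computable_complex x -> computable_complex (conjc x).
Proof. case: x => a b [ha hb]; split => //=; exact: CRN. Qed.

Lemma CR_sqmod z : computable_complex z -> CR (sqmod z).
Proof. case=> h1 h2; rewrite /sqmod !expr2; apply: CRD; exact: CRM. Qed.


Section Ctr.
Lemma ctrmxM p q r (A : 'M[C]_(p, q)) (B : 'M[C]_(q, r)) :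
  ctrmx (A *m B) = ctrmx B *m ctrmx A.
Proof. by rewrite /ctrmx map_mxM trmx_mul. Qed.

Lemma ctrmxK p q (A : 'M[C]_(p, q)) : ctrmx (ctrmx A) = A.
Proof. by apply/matrixP => i j; rewrite !mxE conjcK. Qed.

Lemma ctrmxB p q (A B : 'M[C]_(p, q)) : ctrmx (A - B) = ctrmx A - ctrmx B.
Proof. by apply/matrixP => i j; rewrite !mxE rmorphB. Qed.

Lemma ctrmx1 p : ctrmx (1%:M : 'M[C]_p) = 1%:M.
Proof. by apply/matrixP => i j; rewrite !mxE rmorphMn rmorph1 eq_sym. Qed.

Lemma ctrmx0 p q : ctrmx (0 : 'M[C]_(p, q)) = 0.
Proof. by apply/matrixP => i j; rewrite !mxE conjc0. Qed.

Lemma ctrmx_eq0 p q (Z : 'M[C]_(p, q)) : ctrmx Z *m Z = 0 -> Z = 0.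
Proof.
move=> h; apply/matrixP => i j.
have := congr1 (fun M : 'M[C]_q => M j j) h; rewrite !mxE => /eqP.
rewrite psumr_eq0 => [/allP hall|k _]; last first.
  by rewrite !mxE mulrC mulcJ_ge0.
have := hall i (mem_index_enum i); rewrite !mxE mulrC mulf_eq0 conjc_eq0 orbb.
by move/eqP.
Qed.

Lemma ctrmx_eq0' p q (Z : 'M[C]_(p, q)) : Z *m ctrmx Z = 0 -> Z = 0.
Proof. by move=> h; rewrite -[Z]ctrmxK; rewrite (@ctrmx_eq0 _ _ (ctrmx Z)) ?ctrmx0 // ctrmxK. Qed.

Lemma lemL p q r (M : 'M[C]_(p, q)) (N : 'M[C]_(q, r)) :
  ctrmx M *m M *m N = 0 -> M *m N = 0.
Proof.
move=> h; apply: ctrmx_eq0.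
rewrite ctrmxM.
have -> : ctrmx N *m ctrmx M *m (M *m N) = ctrmx N *m (ctrmx M *m M *m N) by rewrite !mulmxA.
by rewrite h mulmx0.
Qed.

Lemma lemL' p q r (M : 'M[C]_(p, q)) (N : 'M[C]_(r, p)) :
  N *m M *m ctrmx M = 0 -> N *m M = 0.
Proof.
move=> h; rewrite -[N *m M]ctrmxK ctrmxM.
have -> : ctrmx M *m ctrmx N = 0.
  apply: lemL; rewrite ctrmxK.
  have -> : M *m ctrmx M *m ctrmx N = ctrmx (N *m M *m ctrmx M) by rewrite !ctrmxM ctrmxK mulmxA.
  by rewrite h ctrmx0.
by rewrite ctrmx0.
Qed.

Lemma mxrank_ctr p q (M : 'M[C]_(p, q)) : \rank (ctrmx M) = \rank M.
Proof. by rewrite /ctrmx mxrank_tr mxrank_map. Qed.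

Lemma lemR p q (M : 'M[C]_(p, q)) : (ctrmx M <= M *m ctrmx M)%MS.
Proof.
have sub : (M *m ctrmx M <= ctrmx M)%MS by apply: submxMl.
have := mxrank_leqif_sup sub => -[_ <-].
have hk : (kermx (M *m ctrmx M) <= kermx M)%MS.
  apply/sub_kermxP; apply: lemL'; rewrite -mulmxA; exact: mulmx_ker.
have := mxrankS hk; rewrite !mxrank_ker mxrank_ctr.
have := rank_leq_row M; have := rank_leq_row (M *m ctrmx M).
move=> h1 h2 h3.
apply/eqP; apply: anti_leq.
have := mxrankS sub; rewrite mxrank_ctr; lia.
Qed.
End Ctr.


Lemma ctr_herm1 p q (Z : 'M[C]_(p, q)) : ctrmx (ctrmx Z *m Z) = ctrmx Z *m Z.
Proof. by rewrite ctrmxM ctrmxK. Qed.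
Lemma ctr_herm2 p q (Z : 'M[C]_(p, q)) : ctrmx (Z *m ctrmx Z) = Z *m ctrmx Z.
Proof. by rewrite ctrmxM ctrmxK. Qed.

Lemma herm_of1 p (Z : 'M[C]_p) : ctrmx Z = ctrmx Z *m Z -> ctrmx Z = Z.
Proof. by move=> h; rewrite -{2}[Z]ctrmxK h ctr_herm1 h. Qed.
Lemma herm_of2 p (Z : 'M[C]_p) : ctrmx Z = Z *m ctrmx Z -> ctrmx Z = Z.
Proof. by move=> h; rewrite -{2}[Z]ctrmxK h ctr_herm2 h. Qed.

Section Pinv.
Variables m n : nat.
Implicit Types A : 'M[C]_(m, n).

Definition Wof p q (A : 'M[C]_(p, q)) : 'M[C]_(q, p) :=
  ctrmx (A *m pinvmx (ctrmx A *m A)).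

Lemma WofP p q (A : 'M[C]_(p, q)) : ctrmx A *m A *m Wof A = ctrmx A.
Proof.
have h := mulmxKpV (lemR (ctrmx A)); rewrite ctrmxK in h.
by rewrite /Wof -{1}(ctr_herm1 A) -ctrmxM h.
Qed.

Definition Vof p q (A : 'M[C]_(p, q)) : 'M[C]_(q, p) := ctrmx (Wof (ctrmx A)).

Lemma VofP p q (A : 'M[C]_(p, q)) : Vof A *m (A *m ctrmx A) = ctrmx A.
Proof.
have h := WofP (ctrmx A); rewrite ctrmxK in h.
by rewrite /Vof -{1}(ctr_herm2 A) -ctrmxM h.
Qed.

Lemma AWA A : A *m Wof A *m A = A.
Proof.
have : A *m (Wof A *m A - 1%:M) = 0.
  apply: lemL; rewrite !mulmxBr !mulmx1 !mulmxA WofP subrr //.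
by rewrite mulmxBr mulmx1 mulmxA => /eqP; rewrite subr_eq0 => /eqP.
Qed.

Lemma AVA A : A *m Vof A *m A = A.
Proof.
have : (A *m Vof A - 1%:M) *m A = 0.
  apply: lemL'; rewrite !mulmxBl !mul1mx -!mulmxA VofP subrr //.
by rewrite mulmxBl mul1mx => /eqP; rewrite subr_eq0 => /eqP.
Qed.

Lemma AW_herm A : ctrmx (A *m Wof A) = A *m Wof A.
Proof.
apply: herm_of1; rewrite [in LHS]ctrmxM -{1}(WofP A) !mulmxA ctrmxM //.
Qed.

Lemma VA_herm A : ctrmx (Vof A *m A) = Vof A *m A.
Proof.
apply: herm_of2; rewrite [in LHS]ctrmxM -{1}(VofP A) ctrmxM !mulmxA //.
Qed.

Definition X0 A : 'M[C]_(n, m) := Vof A *m A *m Wof A.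

Lemma X0_pinv A : is_pinv A (X0 A).
Proof.
rewrite /X0; split.
- by rewrite !mulmxA (AVA A) AWA.
- have -> : Vof A *m A *m Wof A *m A *m (Vof A *m A *m Wof A) =
     Vof A *m (A *m Wof A *m A) *m Vof A *m A *m Wof A by rewrite !mulmxA.
  rewrite AWA.
  have -> : Vof A *m A *m Vof A *m A *m Wof A = Vof A *m (A *m Vof A *m A) *m Wof A
    by rewrite !mulmxA.
  by rewrite AVA.
- by rewrite !mulmxA AVA AW_herm.
- have -> : Vof A *m A *m Wof A *m A = Vof A *m (A *m Wof A *m A) by rewrite !mulmxA.
  by rewrite AWA VA_herm.
Qed.
End Pinv.

Lemma pinv_ctr p q (A : 'M[C]_(p, q)) X : is_pinv A X -> is_pinv (ctrmx A) (ctrmx X).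
Proof.
case=> h1 h2 h3 h4; split.
- by rewrite -!ctrmxM mulmxA h1.
- by rewrite -!ctrmxM mulmxA h2.
- by rewrite -ctrmxM h4.
- by rewrite -ctrmxM h3.
Qed.

Lemma pinv_XAY p q (A : 'M[C]_(p, q)) X Y : is_pinv A X -> is_pinv A Y -> X = X *m A *m Y.
Proof.
case=> x1 x2 x3 x4 [y1 y2 y3 y4].
(* X = X (AX)^H = X X^H A^H = X X^H (AYA)^H = X X^H A^H Y^H A^H = X (AX)^H (AY)^H = X A X A Y = XAY *)
have e1 : X = X *m ctrmx X *m ctrmx A by rewrite -mulmxA -ctrmxM x3 mulmxA x2.
have e2 : ctrmx A = ctrmx A *m ctrmx Y *m ctrmx A by rewrite -!ctrmxM mulmxA y1.
rewrite {1}e1 {1}e2.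
have -> : X *m ctrmx X *m (ctrmx A *m ctrmx Y *m ctrmx A) =
  X *m (ctrmx (A *m X)) *m ctrmx (A *m Y) by rewrite !ctrmxM !mulmxA.
by rewrite x3 y3 !mulmxA x2.
Qed.

Lemma pinv_unique p q (A : 'M[C]_(p, q)) X Y : is_pinv A X -> is_pinv A Y -> X = Y.
Proof.
move=> hX hY.
have h1 := pinv_XAY hX hY.
have h2 := pinv_XAY (pinv_ctr hY) (pinv_ctr hX).
rewrite -!ctrmxM in h2.
have := congr1 (@ctrmx _ _) h2; rewrite !ctrmxK mulmxA => h3.
by rewrite h1 -h3.
Qed.


Lemma KP_ex (z : C) : exists b : bool, b = true <-> computable_complex z.
Proof.
case: (Classical_Prop.classic (computable_complex z)) => h.
  by exists true; split.
by exists false; split.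
Qed.
Definition KP (z : C) : bool := proj1_sig (constructive_indefinite_description _ (KP_ex z)).
Lemma KPP z : reflect (computable_complex z) (KP z).
Proof.
rewrite /KP; case: constructive_indefinite_description => b /= [h1 h2].
by apply: (iffP idP) => [/h1 //|/h2].
Qed.

Lemma KP_closed : divring_closed KP.
Proof.
split; first exact/KPP/CC_1.
- by move=> x y /KPP hx /KPP hy; apply/KPP/CC_sub.
- by move=> x y /KPP hx /KPP hy; apply/KPP/CC_div.
Qed.
HB.instance Definition _ := GRing.isDivringClosed.Build C KP KP_closed.

Inductive KC := mkKC (x : C) of x \in KP.
Definition kval u := let: mkKC x _ := u in x.
HB.instance Definition _ := [isSub for kval].
HB.instance Definition _ := [Choice of KC by <:].
HB.instance Definition _ := [SubChoice_isSubComUnitRing of KC by <:].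
HB.instance Definition _ := [SubComUnitRing_isSubIntegralDomain of KC by <:].
HB.instance Definition _ := [SubIntegralDomain_isSubField of KC by <:].

Definition kvalP (z : KC) : kval z \in KP := let: mkKC _ p := z in p.

Lemma KP_conj z : z \in KP -> conjc z \in KP.
Proof. by move/KPP => h; apply/KPP/CC_conj. Qed.

Definition conjK (z : KC) : KC := mkKC (KP_conj (kvalP z)).

Definition ctrK p q (M : 'M[KC]_(p, q)) : 'M[KC]_(q, p) := (map_mx conjK M)^T.

Lemma map_ctrK p q (M : 'M[KC]_(p, q)) : map_mx val (ctrK M) = ctrmx (map_mx val M).
Proof. by apply/matrixP => i j; rewrite !mxE; case: (M j i). Qed.

Definition WK p q (A : 'M[KC]_(p, q)) : 'M[KC]_(q, p) := ctrK (A *m pinvmx (ctrK A *m A)).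
Definition VK p q (A : 'M[KC]_(p, q)) : 'M[KC]_(q, p) := ctrK (WK (ctrK A)).
Definition XK p q (A : 'M[KC]_(p, q)) : 'M[KC]_(q, p) := VK A *m A *m WK A.

Lemma map_WK p q (A : 'M[KC]_(p, q)) : map_mx val (WK A) = Wof (map_mx val A).
Proof. by rewrite /WK /Wof map_ctrK map_mxM map_pinvmx map_mxM map_ctrK. Qed.

Lemma map_VK p q (A : 'M[KC]_(p, q)) : map_mx val (VK A) = Vof (map_mx val A).
Proof. by rewrite /VK /Vof map_ctrK map_WK map_ctrK. Qed.

Lemma map_XK p q (A : 'M[KC]_(p, q)) : map_mx val (XK A) = X0 (map_mx val A).
Proof. by rewrite /XK /X0 !map_mxM map_VK map_WK. Qed.

Definition liftK p q (M : 'M[C]_(p, q)) (h : forall i j, M i j \in KP) : 'M[KC]_(p, q) :=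
  \matrix_(i, j) mkKC (h i j).

Lemma liftKK p q (M : 'M[C]_(p, q)) (h : forall i j, M i j \in KP) : map_mx val (liftK h) = M.
Proof. by apply/matrixP => i j; rewrite !mxE. Qed.

Lemma comp_mapK p q (M : 'M[KC]_(p, q)) : computable_mx (map_mx val M).
Proof. by move=> i j; rewrite mxE; apply/KPP/kvalP. Qed.

Lemma comp_liftable p q (M : 'M[C]_(p, q)) : computable_mx M ->
  exists MK : 'M[KC]_(p, q), map_mx val MK = M.
Proof.
move=> h; have h' : forall i j, M i j \in KP by move=> i j; apply/KPP/h.
by exists (liftK h'); apply: liftKK.
Qed.

Lemma CR_frob p q (M : 'M[C]_(p, q)) : computable_mx M -> CR (frob M).
Proof. move=> h; apply/CRsqrt/CR_sum => i; apply: CR_sum => j; exact: CR_sqmod. Qed.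

Lemma CR_norm2 p (v : 'cV[C]_p) : computable_mx v -> CR (norm2 v).
Proof. move=> h; apply/CRsqrt/CR_sum => i; exact: CR_sqmod. Qed.

Lemma Re_sum (I : Type) (r : seq I) (F : I -> C) : complex.Re (\sum_(i <- r) F i) = \sum_(i <- r) complex.Re (F i).
Proof. by apply: (big_morph (fun z : C => complex.Re z)) => // -[a b] [c d]. Qed.

Lemma sqmodD u e : sqmod (u + e) = sqmod u + sqmod e + 2%:R * complex.Re (conjc u * e).
Proof.
have foo (a b c d : R) : ((a + c) ^+ 2 + (b + d) ^+ 2) =
  (a ^+ 2 + b ^+ 2) + (c ^+ 2 + d ^+ 2) + 2 * (a * c - - b * d) by ring.
case: u => a b; case: e => c d; rewrite /sqmod /=; exact: foo. Qed.

Lemma sqmod_ge0 u : 0 <= sqmod u.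
Proof. by rewrite /sqmod addr_ge0 // sqr_ge0. Qed.

Lemma pyth p (u e : 'cV[C]_p) : ctrmx u *m e = 0 -> norm2 e <= norm2 (u + e).
Proof.
move=> h; apply: ler_wsqrtr.
have hs : \sum_(i < p) complex.Re (conjc (u i 0) * e i 0) = 0.
  have := congr1 (fun M : 'M[C]_1 => complex.Re (M 0 0)) h; rewrite /= !mxE Re_sum.
  by move=> h'; rewrite -[RHS]/(complex.Re 0) -h'; apply: eq_bigr => i _; rewrite /ctrmx !mxE.
have -> : \sum_(i < p) sqmod ((u + e) i 0) = \sum_(i < p) (sqmod (u i 0) + sqmod (e i 0) + 2%:R * complex.Re (conjc (u i 0) * e i 0)).
  by apply: eq_bigr => i _; rewrite -sqmodD !mxE.
rewrite !big_split /= -mulr_sumr hs mulr0 addr0 lerDr.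
by rewrite addr_ge0 // sumr_ge0 // => i _; rewrite sqr_ge0.
Qed.

Theorem theorem3p7 (m n : nat) (A : 'M[R[i]]_(m, n)) (b : 'cV[R[i]]_m) :
  computable_mx A -> computable_mx b ->
  (forall X : 'M[R[i]]_(n, m), is_pinv A X ->
     [/\ computable_mx X,
         computable_real (frob X),
         computable_mx (X *m b),
         computable_real (norm2 (X *m b)) &
         computable_real (frob A * frob X)]) /\
  (forall r : R, is_lsq_min A b r -> computable_real r).
Proof.
move=> hA hb.
have [AK eA] := comp_liftable hA.
have [bK eb] := comp_liftable hb.
have eX : X0 A = map_mx val (XK AK) by rewrite map_XK eA.
have hX0 : computable_mx (X0 A) by rewrite eX; apply: comp_mapK.
have hXb : computable_mx (X0 A *m b) by rewrite eX -eb -map_mxM; apply: comp_mapK.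
split.
  move=> X hX; have -> : X = X0 A by apply: (pinv_unique hX); apply: X0_pinv.
  split => //; try (apply: CR_frob || apply: CR_norm2) => //.
  by apply: CRM; apply: CR_frob.
move=> r [[x hx] hr].
set X := X0 A.
have [p1 p2 p3 p4] := X0_pinv A; rewrite -/X in p1 p2 p3 p4.
have hAX : ctrmx A *m A *m X = ctrmx A.
  by rewrite -mulmxA -p3 -ctrmxM p1.
have he : computable_mx (A *m (X *m b) - b).
  by rewrite /X eX -eb -eA -!map_mxM -map_mxB; apply: comp_mapK.
clearbody X.
set e := A *m (X *m b) - b.
have -> : r = norm2 e.
  apply/le_anti/andP; split; first exact: hr.
  rewrite -hx.
  have -> : A *m x - b = A *m (x - X *m b) + e.
    by rewrite /e mulmxBr addrA subrK.
  apply: pyth.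
  have hAe : ctrmx A *m e = 0 by rewrite /e mulmxBr !mulmxA hAX subrr.
  by rewrite ctrmxM -mulmxA hAe mulmx0.
exact: CR_norm2.
Qed.
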